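(* Let $p$ be an odd prime and $G$ a finite non-abelian $2$-generated $p$-group with cyclic $G'$, with parameters $m,o_1,o_2,r_1,r_2$ as in the context. Let $\delta_1,\delta_2$ be the unique integers with $1\le\delta_1\le p^{o_1}$, $1\le\delta_2\le p^{o_2}$ such that $\mathcal{S}_{r_2}(\delta_1p^{m-o_1})\equiv 1-r_1\bmod p^m$ and $\mathcal{S}_{r_1}(\delta_2p^{m-o_2})\,r_2^{\delta_1p^{m-o_1}}\equiv r_2-1\bmod p^m$. Then $\delta_1=\delta_2=1$ if $o_1=0$, and $\delta_1+\delta_2\equiv 0\bmod p^{o_2}$ otherwise.
   Context: $\mathcal{S}_s(n)=\sum_{i=0}^{n-1}s^i$. Let $|G'|=p^m$, $G/G'\cong C_{p^{n_1}}\times C_{p^{n_2}}$, $n_1\ge n_2\ge1$. A basis is a pair $(b_1,b_2)$ with $G/G'=\langle b_1G'\rangle\times\langle b_2G'\rangle$ and $|b_iG'|=p^{n_i}$. For $g\in G$, $p^{o(g)}=|g{\rm C}_G(G')|$. $(o_1,o_2)=\min_{\mathrm{lex}}\{(o(b_1),o(b_2)):(b_1,b_2)\text{ a basis}\}$; $r_1=1+p^{m-o_1}$; $r_2=1+p^{m-o_2}$ if $o_2>o_1$, else $r_2=r_1^{p^{o_1-o_2}}$. *)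

(* Defs.v *)
From mathcomp Require Import all_boot all_order all_algebra all_fingroup all_solvable.
Set Implicit Arguments. Unset Strict Implicit. Unset Printing Implicit Defensive.
Import GRing.Theory.

Definition oexp (gT : finGroupType) (p : nat) (G : {group gT}) (g : gT) : nat :=
  logn p #[coset 'C_G(G^`(1)) g]%g.

Definition is_basis (gT : finGroupType) (p : nat) (G : {group gT})
    (n1 n2 : nat) (b1 b2 : gT) : bool :=
  [&& b1 \in G, b2 \in G,
      #[coset G^`(1) b1]%g == p ^ n1,
      #[coset G^`(1) b2]%g == p ^ n2 &
      ((<[coset G^`(1) b1]> \x <[coset G^`(1) b2]>)%g == (G / G^`(1))%g)].

Definition lexmin_o (gT : finGroupType) (p : nat) (G : {group gT})
    (n1 n2 o1 o2 : nat) : Prop :=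
  (exists b1 b2, is_basis p G n1 n2 b1 b2 /\ oexp p G b1 = o1 /\ oexp p G b2 = o2)
  /\ (forall c1 c2 : gT, is_basis p G n1 n2 c1 c2 ->
        (o1 < oexp p G c1) || ((o1 == oexp p G c1) && (o2 <= oexp p G c2))).

Definition r1_of (p m o1 : nat) : nat := 1 + p ^ (m - o1).
Definition r2_of (p m o1 o2 : nat) : nat :=
  if o1 < o2 then 1 + p ^ (m - o2) else (r1_of p m o1) ^ (p ^ (o1 - o2)).

Definition Ssum (s : int) (n : nat) : int := (\sum_(i < n) s ^+ i)%R.

(* Main.v *)
Require Import Defs.
From mathcomp Require Import all_boot all_order all_algebra all_fingroup all_solvable.
Import GRing.Theory.
From mathcomp Require Import zify ring.
Set Implicit Arguments. Unset Strict Implicit.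

Section Swap.
Local Open Scope group_scope.

Lemma basis_swap (hT : finGroupType) (u v : hT) (H : {group hT}) (j : nat) :
  #[v] %| #[u] -> <[u]> \x <[v]> = H ->
  #[u * (v ^+ j)^-1] = #[u] /\ <[u * (v ^+ j)^-1]> \x <[v]> = H.
Proof.
move=> dvu dp.
have [_ defH cuv ti] := dprodP dp.
have cvu : commute v u.
  by apply/cent1P; rewrite -cent_cycle (subsetP cuv) ?cycle_id.
set w := u * (v ^+ j)^-1.
have cwv : commute w (v ^+ j).
  apply: commute_sym; apply: commuteM; last exact: commuteV (commute_refl _).
  by apply: commute_sym; apply: commuteX; apply: commute_sym.
have cuvj : commute u ((v ^+ j)^-1).
  by apply: commuteV; apply: commuteX; apply: commute_sym.
have uE : u = w * v ^+ j by rewrite /w mulgKV.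
have Hj : forall k, w ^+ k = 1 -> u ^+ k = 1.
  move=> k wk; have e : u ^+ k = v ^+ j ^+ k by rewrite {1}uE expgMn // wk mul1g.
  have : u ^+ k \in <[u]> :&: <[v]>.
    by rewrite in_setI groupX ?cycle_id //= e !groupX ?cycle_id.
  by rewrite ti => /set1P.
have dwu : #[w] %| #[u].
  rewrite order_dvdn /w expgMn // expg_order mul1g expVgn -expgM mulnC expgM.
  by move: dvu; rewrite order_dvdn => /eqP->; rewrite expg1n invg1.
have ow : #[w] = #[u].
  apply/eqP; rewrite eqn_dvd dwu /=. rewrite order_dvdn Hj ?expg_order //.
have tiw : <[w]> :&: <[v]> = 1.
  apply/trivgP/subsetP => z /setIP [/cycleP [k ->] zv]; apply/set1P.
  have : u ^+ k = 1.
    have : u ^+ k \in <[u]> :&: <[v]>.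
      by rewrite in_setI groupX ?cycle_id //= {1}uE expgMn // groupM // !groupX // cycle_id.
    by rewrite ti => /set1P.
  by move/eqP; rewrite -order_dvdn -ow order_dvdn => /eqP.
have cwv1 : <[v]> \subset 'C(<[w]>).
  rewrite cent_cycle cycle_subG; apply/cent1P; rewrite /w.
  apply: commuteM => //; apply: commuteV; exact: commuteX (commute_refl _).
split => //.
rewrite dprodEY //.
have HY : H = <[u]> <*> <[v]> :> {set hT} by rewrite -(dprodEY cuv ti) dp.
apply/eqP; rewrite HY eqEsubset !join_subG !cycle_subG.
have jl : forall (A B : {group hT}) x, x \in A -> x \in A <*> B.
  by move=> A B x xA; rewrite mem_gen // inE xA.
have jr : forall (A B : {group hT}) x, x \in B -> x \in A <*> B.
  by move=> A B x xB; rewrite mem_gen // inE xB orbT.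
apply/andP; split; apply/andP; split.
- rewrite /w; apply: groupM; first by apply: jl; exact: cycle_id.
  by apply: jr; rewrite groupV; apply: groupX; exact: cycle_id.
- by apply: jr; exact: cycle_id.
- rewrite {1}uE; apply: groupM; first by apply: jl; exact: cycle_id.
  by apply: jr; apply: groupX; exact: cycle_id.
- by apply: jr; exact: cycle_id.
Qed.
End Swap.

Section QC.
Local Open Scope group_scope.
Lemma quo_cent_cyclic gT p (G X : {group gT}) : odd p -> (p.-group X)%g -> cyclic X ->
  (G \subset 'N(X))%g -> cyclic (G / 'C_G(X))%g.
Proof.
move=> oddp pX cX nXG.
have [-> | ntX] := eqsVneq X 1%g.
  by rewrite cent1T setIT trivg_quotient cyclic1.
have [f injf im_f] := first_isom_loc [morphism of conj_aut X] nXG.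
move: f injf im_f; rewrite ker_conj_aut => f injf im_f.
have sA: (f @* (G / 'C_G(X)) \subset Aut X)%g by rewrite im_f ?Aut_conj_aut.
have cycA : cyclic (Aut X).
  have [mm [_ [_ cycF _ _] hA]] := cyclic_pgroup_Aut_structure pX cX ntX.
  move: hA; case: eqP => _; first by move=> ->.
  by case=> t [_ _ _]; rewrite oddp => -[[]].
by rewrite -(injm_cyclic injf) ?(cyclicS sA) //.
Qed.
End QC.

Section Grp.
Local Open Scope group_scope.

Lemma nCG gT (G : {group gT}) : G \subset 'N('C_G(G^`(1))).
Proof. by rewrite -{1}(setIidPl (normal_norm (der_normal 1 G))) subcent_norm. Qed.

Lemma oexp_le gT (p : nat) (G : {group gT}) m g : prime p -> p.-group G -> cyclic (G^`(1)) ->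
  #|G^`(1)| = (p ^ m)%N -> g \in G -> (oexp p G g <= m.-1)%N.
Proof.
move=> pr pG cG' oG' Gg; rewrite /oexp.
have := logn_quotient_cent_cyclic_pgroup (normal_norm (der_normal 1 G)) (pgroupS (der_sub 1 G) pG) cG'.
rewrite oG' pfactorK //; apply: leq_trans; apply: dvdn_leq_log => //.
exact: order_dvdG (mem_quotient _ Gg).
Qed.

Lemma order_pexp gT (p : nat) (G : {group gT}) g : p.-group G -> prime p -> g \in G ->
  #[coset 'C_G(G^`(1)) g] = (p ^ oexp p G g)%N.
Proof.
move=> pG pr Gg; rewrite /oexp.
have : p.-elt (coset 'C_G(G^`(1)) g).
  by apply: (mem_p_elt (quotient_pgroup _ pG)); apply: mem_quotient.
by move=> /p_natP [k ->]; rewrite pfactorK.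
Qed.

Lemma o_le gT (p : nat) (G : {group gT}) n1 n2 o1 o2 : prime p -> odd p -> p.-group G ->
  cyclic (G^`(1)) -> (n2 <= n1)%N -> lexmin_o p G n1 n2 o1 o2 -> o1 != 0%N -> (o2 <= o1)%N.
Proof.
move=> pr oddp pG cG' n21 [[b1 [b2 [hb [ho1 ho2]]]] hmin] o1n0.
rewrite leqNgt; apply/negP => lt12.
move: (hb) => /and5P [Gb1 Gb2 ob1 ob2 /eqP dp].
set C := 'C_G(G^`(1)).
have cycQ : cyclic (G / C) := quo_cent_cyclic oddp (pgroupS (der_sub 1 G) pG) cG'
   (normal_norm (der_normal 1 G)).
have nC := subsetP (nCG G).
set x := coset C b1; set y := coset C b2.
have Qx : x \in G / C by apply: mem_quotient.
have Qy : y \in G / C by apply: mem_quotient.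
have ox : #[x] = (p ^ o1)%N by rewrite /x (order_pexp pG) // ho1.
have oy : #[y] = (p ^ o2)%N by rewrite /y (order_pexp pG) // ho2.
have : <[x]> \subset <[y]>.
  rewrite -(cardSg_cyclic cycQ) ?cycle_subG // -!orderE ox oy dvdn_exp2l //.
  exact: ltnW.
rewrite cycle_subG => /cycleP [j xj].
set c1 := b1 * (b2 ^+ j)^-1.
have Gc1 : c1 \in G by rewrite /c1 groupM ?groupV ?groupX.
have oc1 : oexp p G c1 = 0%N.
  rewrite /oexp /c1 morphM ?morphV ?morphX ?nC ?groupV ?groupX //.
  by rewrite -[coset_morphism _ b1]/x -[coset_morphism _ b2]/y xj mulgV order1 logn1.
have Nb1 : b1 \in 'N(G^`(1)) := subsetP (normal_norm (der_normal 1 G)) b1 Gb1.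
have Nb2 : b2 \in 'N(G^`(1)) := subsetP (normal_norm (der_normal 1 G)) b2 Gb2.
have dv : #[coset G^`(1) b2] %| #[coset G^`(1) b1].
  by rewrite (eqP ob1) (eqP ob2) dvdn_exp2l.
have [ow dw] := basis_swap j dv dp.
have hb' : is_basis p G n1 n2 c1 b2.
  apply/and5P; split => //.
  - by rewrite /c1 morphM ?morphV ?morphX ?groupV ?groupX // ow.
  - by rewrite /c1 morphM ?morphV ?morphX ?groupV ?groupX // dw.
  have := hmin _ _ hb'; rewrite oc1 ltn0 /=.
by rewrite (negbTE o1n0).
Qed.
End Grp.

Definition Sn (r n : nat) : nat := \sum_(i < n) r ^ i.

Lemma Sn0 r : Sn r 0 = 0. Proof. by rewrite /Sn big_ord0. Qed.
Lemma SnS r n : Sn r n.+1 = Sn r n + r ^ n. Proof. by rewrite /Sn big_ord_recr. Qed.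

Lemma Sn_add r a b : Sn r (a + b) = Sn r a + r ^ a * Sn r b.
Proof.
elim: b => [|b IH]; first by rewrite addn0 Sn0 muln0 addn0.
by rewrite addnS !SnS IH expnD mulnDr addnA.
Qed.

Lemma Sn_geom t n : (t.+1) ^ n = 1 + t * Sn t.+1 n.
Proof.
elim: n => [|n IH]; first by rewrite Sn0 muln0.
rewrite SnS expnS IH mulnDr; nia.
Qed.

Lemma Sn_mul r k n : Sn r (k * n) = Sn r k * Sn (r ^ k) n.
Proof.
elim: n => [|n IH]; first by rewrite muln0 !Sn0 muln0.
by rewrite mulnS addnC Sn_add IH SnS -expnM mulnDr mulnC; nia.
Qed.

Lemma Sn_cong t n : exists T, Sn t.+1 n = n + t * T.
Proof.
elim: n => [|n [T IH]]; first by exists 0; rewrite Sn0 muln0.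
exists (T + Sn t.+1 n); rewrite SnS IH Sn_geom; nia.
Qed.

Lemma Sn_cong2 t n : exists W, Sn t.+1 n = n + t * 'C(n, 2) + t * t * W.
Proof.
elim: n => [|n [W IH]]; first by exists 0; rewrite Sn0 bin0n; nia.
have [T hT] := Sn_cong t n.
exists (W + T); rewrite SnS IH Sn_geom hT binS bin1; nia.
Qed.

Lemma Sn_ppow p k r : 0 < r -> p %| r - 1 -> p ^ k %| Sn r (p ^ k).
Proof.
elim: k r => [|k IH] r r0 pr; first by rewrite expn0 dvd1n.
rewrite expnS Sn_mul; apply: dvdn_mul.
  case: r r0 pr => // t _; rewrite subn1 /= => pt.
  by have [T ->] := Sn_cong t p; rewrite dvdn_add // dvdn_mulr.
apply: IH; first by rewrite expn_gt0 r0.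
case: r r0 pr => // t _; rewrite subn1 /= => pt.
by rewrite Sn_geom addKn dvdn_mulr.
Qed.

Lemma Sn_p p t : prime p -> odd p -> p %| t -> exists Y, Sn t.+1 p = p * (1 + p * Y).
Proof.
move=> pr op pt.
have [W hW] := Sn_cong2 t p.
have p2 : 2 < p.
  by case: p pr op {pt hW} => [|[|[|]]].
have pc : p %| 'C(p, 2) by apply: prime_dvd_bin.
rewrite hW; move: pt pc => /dvdnP [a ->] /dvdnP [c ->].
exists (a * c + a * a * W); nia.
Qed.

Lemma Sn_val p k r N : prime p -> odd p -> 0 < r -> p %| r - 1 -> p ^ k %| Sn r N -> p ^ k %| N.
Proof.
move=> pr op; elim: k r N => [|k IH] r N r0 pr1; first by rewrite expn0 dvd1n.
case: r r0 pr1 => // t _; rewrite subn1 /= => pt hS.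
have pN : p %| N.
  have [T hT] := Sn_cong t N.
  have : p %| Sn t.+1 N by apply: dvdn_trans hS; rewrite expnS dvdn_mulr.
  by rewrite hT dvdn_addl // dvdn_mulr.
move: pN hS => /dvdnP [N' ->]; rewrite mulnC Sn_mul.
have [Y ->] := Sn_p pr op pt.
rewrite !expnS -mulnA dvdn_pmul2l ?prime_gt0 // => h.
rewrite dvdn_pmul2l ?prime_gt0 //.
apply: (IH (t.+1 ^ p)); first by rewrite expn_gt0.
  by rewrite Sn_geom addKn dvdn_mulr.
move: h; rewrite Gauss_dvdr //.
apply: coprimeXl; rewrite /coprime gcdnC; apply/eqP.
by rewrite -gcdn_modl addnC mulnC modnMDl modn_small ?prime_gt1 // gcd1n.
Qed.

Lemma PoszX (n k : nat) : Posz (n ^ k) = ((Posz n) ^+ k)%R.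
Proof. elim: k => [|k IH]; first by []. by rewrite expnS exprS PoszM IH. Qed.

Lemma SsumE (r n : nat) : Ssum (Posz r) n = Posz (Sn r n).
Proof.
elim: n => [|n IH]; first by rewrite /Ssum big_ord0 Sn0.
by rewrite /Ssum big_ord_recr /= -/(Ssum _ _) IH SnS PoszD PoszX.
Qed.

Lemma case0 (p m o2 d2 : nat) : prime p -> 0 < o2 -> o2 < m -> 1 <= d2 <= p ^ o2 ->
  (Ssum (r1_of p m 0)%:Z (d2 * p ^ (m - o2))
     * ((r2_of p m 0 o2)%:Z ^+ (1 * p ^ (m - 0)))%R
     = (r2_of p m 0 o2)%:Z - 1 %[mod (p ^ m)%:Z])%Z -> d2 = 1.
Proof.
move=> pr o2p o2m /andP [d2p d2le] /eqP.
rewrite eqz_mod_dvd /r2_of o2p /r1_of subn0 mul1n SsumE.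
set b := m - o2.
have bp : 0 < b by rewrite /b; lia.
have [T hT] := Sn_cong (p ^ m) (d2 * p ^ b).
have [Z hZ] : exists Z, Sn (1 + p ^ b) (p ^ m) = Z * p ^ m.
  apply/dvdnP; apply: Sn_ppow => //.
  by rewrite add1n subn1 /= dvdn_exp // .
rewrite add1n hT -PoszX Sn_geom -add1n hZ.
case: d2 d2p d2le hT => // d2' _ d2le _.
move=> h.
have : (Posz (p ^ m)%N %| Posz (d2' * p ^ b)%N)%Z.
  move/dvdzP: h => [q hq]; apply/dvdzP.
  set P := (p ^ m)%N in hq *; set Q := (p ^ b)%N in hq *.
  exists (q - (Posz T + Posz d2'.+1 * Posz Q * Posz Q * Posz Z
          + Posz P * Posz T * Posz Q * Posz Z))%R.
  rewrite mulrBl -hq -[d2'.+1]addn1 !PoszD !PoszM; ring.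
rewrite dvdzE /= => h2.
have mE : p ^ m = p ^ o2 * p ^ b.
  by rewrite -expnD /b subnKC // ltnW.
move: h2; rewrite mE dvdn_pmul2r ?expn_gt0 ?prime_gt0 // => h3.
case: (posnP d2') => [-> // | d2pos].
have := dvdn_leq d2pos h3; lia.
Qed.

Lemma caseG (p m o1 o2 d1 d2 : nat) : prime p -> odd p -> 0 < o1 -> o2 <= o1 -> o1 < m ->
  (Ssum (r2_of p m o1 o2)%:Z (d1 * p ^ (m - o1))
     = 1 - (r1_of p m o1)%:Z %[mod (p ^ m)%:Z])%Z ->
  (Ssum (r1_of p m o1)%:Z (d2 * p ^ (m - o2))
     * ((r2_of p m o1 o2)%:Z ^+ (d1 * p ^ (m - o1)))%R
     = (r2_of p m o1 o2)%:Z - 1 %[mod (p ^ m)%:Z])%Z ->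
  d1 + d2 = 0 %[mod p ^ o2].
Proof.
move=> pr op o1p o21 o1m /eqP H1 /eqP H2.
rewrite eqz_mod_dvd in H1; rewrite eqz_mod_dvd in H2.
have nlt : (o1 < o2) = false by apply/negbTE; rewrite -leqNgt.
rewrite /r2_of nlt /r1_of !SsumE -PoszX in H1 H2.
set a := m - o1 in H1 H2; set e := o1 - o2 in H1 H2; set b := m - o2 in H2 *.
have eab : e + a = b by rewrite /e /a /b; lia.
have ap : 0 < a by rewrite /a; lia.
have Eexp : p ^ e * (d1 * p ^ a) = d1 * p ^ b by rewrite mulnCA -expnD eab.
have F1 : Sn (1 + p ^ a) (p ^ e) * Sn ((1 + p ^ a) ^ p ^ e) (d1 * p ^ a)
          = Sn (1 + p ^ a) (d1 * p ^ b) by rewrite -Sn_mul Eexp.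
have F2 : (1 + p ^ a) ^ p ^ e = 1 + p ^ a * Sn (1 + p ^ a) (p ^ e).
  by rewrite add1n Sn_geom.
have F3 : ((1 + p ^ a) ^ p ^ e) ^ (d1 * p ^ a) = (1 + p ^ a) ^ (d1 * p ^ b).
  by rewrite -expnM Eexp.
have hdiv : (Posz (p ^ m)%N %| Posz (Sn (1 + p ^ a) (d1 * p ^ b + d2 * p ^ b)))%Z.
  move/dvdzP: H1 => [q1 hq1]; move/dvdzP: H2 => [q2 hq2].
  apply/dvdzP; exists (q1 * Posz (Sn (1 + p ^ a) (p ^ e)) + q2)%R.
  rewrite F3 in hq2.
  rewrite mulrDl mulrAC -hq1 -hq2 Sn_add -F1.
  move: (Sn ((1 + p ^ a) ^ p ^ e) (d1 * p ^ a)) => B.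
  rewrite F2.
  move: (Sn (1 + p ^ a) (p ^ e)) (Sn (1 + p ^ a) (d2 * p ^ b)) ((1 + p ^ a) ^ (d1 * p ^ b)) => A C D.
  rewrite !PoszD !PoszM; ring.
move: hdiv; rewrite dvdzE => hdiv0.
have hdiv : p ^ m %| Sn (1 + p ^ a) (d1 * p ^ b + d2 * p ^ b) := hdiv0.
have h2 : p ^ m %| d1 * p ^ b + d2 * p ^ b.
  have r0 : 0 < 1 + p ^ a by rewrite add1n.
  have pr1 : p %| 1 + p ^ a - 1 by rewrite add1n subn1 /= dvdn_exp.
  exact: (@Sn_val p m (1 + p ^ a) (d1 * p ^ b + d2 * p ^ b) pr op r0 pr1 hdiv).
have mE : p ^ m = p ^ o2 * p ^ b.
  by rewrite -expnD /b subnKC // (leq_trans o21 (ltnW o1m)).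
move: h2; rewrite -mulnDl mE dvdn_pmul2r ?expn_gt0 ?prime_gt0 // => h3.
by rewrite mod0n; apply/eqP.
Qed.

Unset Implicit Arguments. Set Strict Implicit.

Theorem lemma3p6 (gT : finGroupType) (G : {group gT}) (p m n1 n2 o1 o2 d1 d2 : nat) :
  prime p -> odd p ->
  (p.-group G)%g -> ~~ abelian G -> cyclic (G^`(1))%g ->
  #|G^`(1)%g| = p ^ m ->
  1 <= n2 -> n2 <= n1 ->
  (exists b1 b2 : gT, is_basis p G n1 n2 b1 b2) ->
  lexmin_o p G n1 n2 o1 o2 ->
  1 <= d1 <= p ^ o1 -> 1 <= d2 <= p ^ o2 ->
  (Ssum (r2_of p m o1 o2)%:Z (d1 * p ^ (m - o1))
     = 1 - (r1_of p m o1)%:Z %[mod (p ^ m)%:Z])%Z ->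
  (Ssum (r1_of p m o1)%:Z (d2 * p ^ (m - o2))
     * ((r2_of p m o1 o2)%:Z ^+ (d1 * p ^ (m - o1)))%R
     = (r2_of p m o1 o2)%:Z - 1 %[mod (p ^ m)%:Z])%Z ->
  (o1 = 0 -> d1 = 1 /\ d2 = 1) /\
  (o1 <> 0 -> d1 + d2 = 0 %[mod p ^ o2]).
Proof.
move=> pr op pG nab cG' oG' n2p n21 _ hlex hd1 hd2 H1 H2.
have m0 : 0 < m.
  case: m oG' {H1 H2} => // /eqP; rewrite expn0 -trivg_card1 => /eqP /derG1P.
  by rewrite (negbTE nab).
have [[b1 [b2 [hb [ho1 ho2]]]] _] := hlex.
move: (hb) => /and5P [Gb1 Gb2 _ _ _].
have o1le : o1 <= m.-1 by rewrite -ho1; apply: (oexp_le pr pG cG' oG' Gb1).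
have o2le : o2 <= m.-1 by rewrite -ho2; apply: (oexp_le pr pG cG' oG' Gb2).
split.
- move=> o10; move: hd1 H1 H2; rewrite o10 => hd1 H1 H2.
  have d11 : d1 = 1 by move: hd1; clear; rewrite ?expn0; lia.
  subst d1; split => //.
  case: (posnP o2) => [o20 | o2p].
    by move: hd2; rewrite o20; clear; rewrite ?expn0; lia.
  apply: (case0 pr o2p _ hd2 H2); clear -o2le m0; lia.
- move=> o1n0; apply: (caseG pr op _ _ _ H1 H2).
  + by rewrite lt0n; apply/eqP.
  + by apply: (o_le pr op pG cG' n21 hlex); apply/eqP.
  + clear -o1le m0; lia.
Qed.
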